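(* Let $T$ be a node with $t$ cases, let $R_0$ be the residual sum of squares of the current residuals in $T$ (before fitting), and let $\Delta_1,\Delta_2$ and $v_1,v_2$ be the impurity gains and degrees of freedom of two regression models fitted on $T$. Then: (i) If model 1 does better than CON, i.e. $\mathrm{BIC}_{con}>\mathrm{BIC}_1$, then $t\Delta_1/R_0>C(v_1,t)>0$ for some positive function $C$ depending only on $v_1$ and $t$. (ii) If $\mathrm{BIC}_{con}>\mathrm{BIC}_1$ and $\mathrm{BIC}_2>\mathrm{BIC}_1$ with $v_2\ge v_1$, then $\frac{\Delta_1}{\Delta_2}\ge\frac{v_1-1}{v_2-1}$. Moreover, if CON is chosen at a node, it will also be chosen in subsequent model selections on that node.
   Context: For a model fitted by least squares to the current residuals $r$ of the $t$ cases in a node $T$, the impurity gain is $\Delta=(R_0-\mathrm{RSS})/t$, where $\mathrm{RSS}$ is the residual sum of squares after the fit, so $\mathrm{RSS}=R_0-t\Delta$. The BIC of a model with $v$ degrees of freedom is $\mathrm{BIC}=t\log(\mathrm{RSS}/t)+v\log t$. CON is the constant (mean) fit, with $v=1$. In the PILOT algorithm, in each node the model (among CON, LIN, PCON, BLIN, PLIN with $v=1,2,5,5,7$) with smallest BIC is selected; ''subsequent model selections'' means selection applied again to the residuals of the node after the fit. *)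

(* Defs.v *)
From mathcomp Require Import all_boot all_order all_algebra.
From mathcomp Require Import all_classical all_reals all_analysis.
Import Order.TTheory GRing.Theory Num.Theory.
Local Open Scope ring_scope.
Local Open Scope classical_set_scope.

Set Implicit Arguments.
Unset Strict Implicit.
Unset Printing Implicit Defensive.

Definition rss {R : realType} {t : nat} (r f : 'I_t -> R) : R :=
  \sum_(i < t) (r i - f i) ^+ 2.

Definition rss0 {R : realType} {t : nat} (r : 'I_t -> R) : R :=
  \sum_(i < t) r i ^+ 2.

Definition gain {R : realType} {t : nat} (r f : 'I_t -> R) : R :=
  (rss0 r - rss r f) / t%:R.

Definition BIC {R : realType} (t : nat) (RSS : R) (v : nat) : R :=
  t%:R * ln (RSS / t%:R) + v%:R * ln t%:R.

Definition BIC_of {R : realType} {t : nat} (r f : 'I_t -> R) (v : nat) : R :=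
  BIC t (rss r f) v.

(* CON: least squares constant fit = the mean, with v = 1 *)
Definition mean {R : realType} {t : nat} (r : 'I_t -> R) : R :=
  (\sum_(i < t) r i) / t%:R.

Definition con_fit {R : realType} {t : nat} (r : 'I_t -> R) : 'I_t -> R :=
  fun _ => mean r.

Definition BIC_con {R : realType} {t : nat} (r : 'I_t -> R) : R :=
  BIC_of r (con_fit r) 1.

(* The PILOT candidate models; X i j = value of predictor j for case i *)
Inductive model := CON | LIN | PCON | BLIN | PLIN.

Definition df (m : model) : nat :=
  match m with CON => 1 | LIN => 2 | PCON => 5 | BLIN => 5 | PLIN => 7 end%N.

Definition model_class {R : realType} {t p : nat} (X : 'I_t -> 'I_p -> R)
  (m : model) : set ('I_t -> R) :=
  match m with
  | CON => [set f | exists a : R, forall i, f i = a]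
  | LIN => [set f | exists (j : 'I_p) (a b : R), forall i, f i = a + b * X i j]
  | PCON => [set f | exists (j : 'I_p) (s a b : R),
              forall i, f i = if X i j <= s then a else b]
  | BLIN => [set f | exists (j : 'I_p) (s a b c : R),
              forall i, f i = a + b * X i j + c * Num.max (X i j - s) 0]
  | PLIN => [set f | exists (j : 'I_p) (s a1 b1 a2 b2 : R),
              forall i, f i = if X i j <= s then a1 + b1 * X i j
                                            else a2 + b2 * X i j]
  end.

Definition ls_fit {R : realType} {t : nat} (M : set ('I_t -> R))
  (r f : 'I_t -> R) : Prop :=
  M f /\ forall g, M g -> rss r f <= rss r g.

Definition selected {R : realType} {t : nat} (r : 'I_t -> R)
  (fits : model -> 'I_t -> R) (m : model) : Prop :=
  forall m', BIC_of r (fits m) (df m) <= BIC_of r (fits m') (df m').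

(* Main.v *)
Require Import Defs.
From mathcomp Require Import all_boot all_order all_algebra.
From mathcomp Require Import all_classical all_reals all_analysis.
From mathcomp Require Import ring lra.
Import Order.TTheory GRing.Theory Num.Theory.
Local Open Scope ring_scope.
Set Implicit Arguments.
Unset Strict Implicit.

Lemma bic_key (R : realType) (t : nat) (x y : R) (v w : nat) :
  (1 < t)%N -> 0 < x -> 0 < y -> BIC t x v < BIC t y w ->
  x * expR ((v%:R - w%:R) * (ln t%:R / t%:R)) < y.
Proof.
move=> t1 x0 y0; rewrite /BIC.
have t0 : (0 : R) < t%:R by rewrite ltr0n (ltn_trans _ t1).
rewrite !ln_div ?posrE //.
set L := ln t%:R => H.
have H2 : ln x + (v%:R - w%:R) * (L / t%:R) < ln y.
  rewrite -(ltr_pM2l t0) mulrDr.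
  have -> : t%:R * ((v%:R - w%:R) * (L / t%:R)) = (v%:R - w%:R) * L :> R.
    by field; rewrite gt_eqF.
  lra.
rewrite -ltr_expR expRD lnK ?posrE // lnK ?posrE // in H2.
Qed.

Lemma rss_con_le (R : realType) (t : nat) (r : 'I_t -> R) :
  (0 < t)%N -> rss r (con_fit r) <= rss0 r.
Proof.
move=> t0; rewrite /rss /rss0 /con_fit /mean.
set S := \sum_(i < t) r i; set m := S / t%:R.
have tR : (t%:R : R) != 0 by rewrite pnatr_eq0 -lt0n.
have hS : S = m * t%:R by rewrite /m mulfVK.
have -> : \sum_(i < t) (r i - m) ^+ 2
    = \sum_(i < t) r i ^+ 2 - (m * 2) * S + (m ^+ 2) *+ t.
  have E : forall i, (r i - m) ^+ 2 = r i ^+ 2 - (m * 2) * r i + m ^+ 2.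
    by move=> i; ring.
  rewrite (eq_bigr _ (fun i _ => E i)) big_split /= sumrB -mulr_sumr.
  by rewrite sumr_const card_ord.
rewrite hS -mulr_natr.
have : 0 <= m ^+ 2 * t%:R by rewrite mulr_ge0 // sqr_ge0.
lra.
Qed.

Lemma class_shift (R : realType) (t p : nat) (X : 'I_t -> 'I_p -> R) m
  (f : 'I_t -> R) c :
  model_class X m f -> model_class X m (fun i => f i + c).
Proof.
case: m => /=.
- by case=> a Ha; exists (a + c) => i; rewrite Ha.
- by case=> j [a [b H]]; exists j, (a + c), b => i; rewrite H; ring.
- case=> j [s [a [b H]]]; exists j, s, (a + c), (b + c) => i.
  by rewrite H; case: ifP.
- by case=> j [s [a [b [d H]]]]; exists j, s, (a + c), b, d => i; rewrite H; ring.
- case=> j [s [a1 [b1 [a2 [b2 H]]]]]; exists j, s, (a1 + c), b1, (a2 + c), b2 => i.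
  by rewrite H; case: ifP => _; ring.
Qed.

Lemma rss_shift (R : realType) (t : nat) (r r' f : 'I_t -> R) c :
  (forall i, r' i = r i - c) -> rss r' f = rss r (fun i => f i + c).
Proof.
by move=> H; rewrite /rss; apply: eq_bigr => i _; rewrite H; congr (_ ^+ 2); ring.
Qed.

Lemma rss_shift_eq (R : realType) (t p : nat) (X : 'I_t -> 'I_p -> R) m
  (r r' f f' : 'I_t -> R) c :
  (forall i, r' i = r i - c) ->
  ls_fit (model_class X m) r f -> ls_fit (model_class X m) r' f' ->
  rss r' f' = rss r f.
Proof.
move=> H [Mf Hf] [Mf' Hf']; apply/eqP; rewrite eq_le; apply/andP; split.
- apply: le_trans (Hf' _ (@class_shift _ _ _ X m f (- c) Mf)) _.
  rewrite (@rss_shift _ _ r r' _ c H) le_eqVlt; apply/orP; left; apply/eqP.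
  by rewrite /rss; apply: eq_bigr => i _ /=; rewrite subrK.
- have := Hf _ (@class_shift _ _ _ X m f' c Mf').
  by rewrite -(@rss_shift _ _ r r' _ c H).
Qed.

Unset Implicit Arguments.
Set Strict Implicit.

Theorem proposition2 (R : realType) :
  (* (i) *)
  (exists C : nat -> nat -> R,
     (forall v t : nat, (2 <= v)%N -> (1 < t)%N -> 0 < C v t) /\
     forall (t : nat) (r f1 : 'I_t -> R) (v1 : nat),
       (2 <= v1)%N -> (1 < t)%N ->
       0 < rss r (con_fit r) -> 0 < rss r f1 ->
       BIC_of r f1 v1 < BIC_con r ->
       C v1 t < t%:R * gain r f1 / rss0 r)
  /\
  (* (ii) *)
  (forall (t : nat) (r f1 f2 : 'I_t -> R) (v1 v2 : nat),
     (2 <= v1)%N -> (v1 <= v2)%N -> (1 < t)%N ->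
     0 < rss r (con_fit r) -> 0 < rss r f1 -> 0 < rss r f2 ->
     0 < gain r f2 ->
     BIC_of r f1 v1 < BIC_con r -> BIC_of r f1 v1 < BIC_of r f2 v2 ->
     (v1%:R - 1) / (v2%:R - 1) <= gain r f1 / gain r f2)
  /\
  (* moreover: once CON is chosen, it stays chosen in subsequent selections *)
  (forall (t p : nat) (X : 'I_t -> 'I_p -> R)
          (rs : nat -> 'I_t -> R) (fs : nat -> model -> 'I_t -> R),
     (forall k m, ls_fit (model_class X m) (rs k) (fs k m)) ->
     (forall k, selected (rs k) (fs k) CON ->
                forall i, rs k.+1 i = rs k i - fs k CON i) ->
     selected (rs 0%N) (fs 0%N) CON ->
     forall k, selected (rs k) (fs k) CON).
Proof.
split; [|split].
- exists (fun v t => 1 - expR (- ((v%:R - 1) * (ln t%:R / t%:R)))); split.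
    move=> v t hv ht.
    have t0 : (0 : R) < t%:R by rewrite ltr0n (ltn_trans _ ht).
    have v0 : (0 : R) < v%:R - 1.
      by rewrite subr_gt0 (_ : 1 = 1%:R) // ltr_nat.
    have l0 : 0 < ln (t%:R : R) by apply: ln_gt0; rewrite ltr1n.
    have : expR (- ((v%:R - 1) * (ln t%:R / t%:R))) < 1 :> R.
      by rewrite expR_lt1 oppr_lt0 mulr_gt0 // divr_gt0.
    lra.
  move=> t r f1 v1 hv ht hc h1 hB.
  have t0 : (0 : R) < t%:R by rewrite ltr0n (ltn_trans _ ht).
  have K := bic_key ht h1 hc hB.
  rewrite mulr1n in K.
  set y := (v1%:R - 1) * (ln t%:R / t%:R) in K *.
  have hR0 := rss_con_le r (ltn_trans (isT : (0 < 1)%N) ht).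
  set x1 := rss r f1 in K h1 *; set xc := rss r (con_fit r) in K hc hR0 *.
  set R0 := rss0 r in hR0 *.
  have AE : expR y * expR (- y) = 1 by rewrite -expRD subrr expR0.
  have E0 := expR_gt0 (- y).
  have A0 := expR_gt0 y.
  have hx : x1 < R0 * expR (- y).
    have : x1 * expR y * expR (- y) < xc * expR (- y) by rewrite ltr_pM2r.
    rewrite -mulrA AE mulr1 => h; apply: (lt_le_trans h).
    by rewrite ler_pM2r.
  rewrite /gain -/R0 -/x1.
  have -> : t%:R * ((R0 - x1) / t%:R) = R0 - x1 by field; rewrite gt_eqF.
  rewrite ltr_pdivlMr; last exact: lt_le_trans hc hR0.
  lra.
- move=> t r f1 f2 v1 v2 hv hv12 ht hc h1 h2 hg2 hB1 hB2.
  have t0 : (0 : R) < t%:R by rewrite ltr0n (ltn_trans _ ht).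
  have K1 := bic_key ht h1 hc hB1.
  have K2 := bic_key ht h1 h2 hB2.
  rewrite mulr1n in K1.
  have hR0 := rss_con_le r (ltn_trans (isT : (0 < 1)%N) ht).
  have u0 : 0 < ln (t%:R : R) / t%:R by rewrite divr_gt0 // ln_gt0 // ltr1n.
  set u := ln (t%:R : R) / t%:R in K1 K2 u0.
  set x1 := rss r f1 in K1 K2 h1 *; set xc := rss r (con_fit r) in K1 hc hR0 *.
  set x2 := rss r f2 in K2 h2 *.
  set R0 := rss0 r in hR0 *.
  have V1 : (2 : R) <= v1%:R by rewrite -[2]/(2%:R) ler_nat.
  have V12 : (v1%:R : R) <= v2%:R by rewrite ler_nat.
  set a := (v1%:R : R) in V1 V12 K1 K2 *; set b := (v2%:R : R) in V12 K2 *.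
  have hA := expR_ge1Dx ((a - 1) * u).
  have hB := expR_ge1Dx ((a - b) * u).
  have h1A : x1 * (1 + (a - 1) * u) <= x1 * expR ((a - 1) * u) by rewrite ler_pM2l.
  have h1B : x1 * (1 + (a - b) * u) <= x1 * expR ((a - b) * u) by rewrite ler_pM2l.
  have g2 : 0 < R0 - x2 by move: hg2; rewrite /gain -/R0 -/x2 pmulr_lgt0 // invr_gt0.
  have s1 : x1 - x2 <= x1 * (b - a) * u by nra.
  have s2 : x1 * (a - 1) * u <= R0 - x1 by nra.
  have s3 : (a - 1) * (x1 - x2) <= (a - 1) * (x1 * (b - a) * u).
    by rewrite ler_wpM2l // subr_ge0; lra.
  have s4 : (b - a) * (x1 * (a - 1) * u) <= (b - a) * (R0 - x1).
    by rewrite ler_wpM2l // subr_ge0.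
  rewrite /gain -/R0 -/x1 -/x2.
  have -> : (R0 - x1) / t%:R / ((R0 - x2) / t%:R) = (R0 - x1) / (R0 - x2).
    by field; rewrite !gt_eqF.
  rewrite ler_pdivrMr; last lra.
  rewrite mulrAC ler_pdivlMr; last lra.
  nra.
- move=> t p X rs fs Hfit Hstep H0; elim=> [//|k IH].
  have [[a Ha] _] := Hfit k CON.
  have H' : forall i, rs k.+1 i = rs k i - a.
    by move=> i; rewrite (Hstep k IH i) Ha.
  have E : forall m, rss (rs k.+1) (fs k.+1 m) = rss (rs k) (fs k m).
    by move=> m; apply: (rss_shift_eq H' (Hfit k m) (Hfit k.+1 m)).
  by move=> m'; rewrite /BIC_of !E; apply: IH.
Qed.
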